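(* For every $N\ge2$, every unistochastic $N\times N$ matrix $B=V\odot\overline{V}$ ($V\in U(N)$) arises as the hyper-decoherence of some unistochastic channel: there exists $U\in U(N^2)$ with $B=\mathcal{D}_h(\Psi_U)$. That is, $\mathcal{U}_N^C\subseteq\mathcal{D}_h(\mathcal{U}_N^Q)$.
   Context: $\odot$ is the entrywise (Hadamard) product; $\mathcal{U}_N^C=\{V\odot\overline{V}:V\in U(N)\}$. For $U\in U(N^2)$ acting on $\mathbb{C}^N\otimes\mathbb{C}^N_E$, the unistochastic channel is $\Psi_U(\rho)=\mathrm{Tr}_E[U(\rho\otimes\mathbb{I}_N/N)U^\dagger]$, and $\mathcal{U}_N^Q=\{\Psi_U:U\in U(N^2)\}$. Hyper-decoherence of a channel $\Phi$ is the $N\times N$ matrix $\mathcal{D}_h(\Phi)_{ij}=\mathrm{Tr}[|i\rangle\langle i|\,\Phi(|j\rangle\langle j|)]$. *)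

(* Defs.v *)
From HB Require Import structures.
From mathcomp Require Import all_boot all_order all_algebra.
From mathcomp Require Export spectral.
From mathcomp Require mxtens.
Set Implicit Arguments. Unset Strict Implicit. Unset Printing Implicit Defensive.
Import Order.TTheory GRing.Theory Num.Theory.
Local Open Scope ring_scope.

Definition dagger {C : numClosedFieldType} m n (A : 'M[C]_(m, n)) : 'M[C]_(n, m) :=
  map_mx Num.conj (trmx A).

(* C^N (x) C^N_E is identified with C^(N*N); the Kronecker product
   mxtens.tensmx A B has basis index  mxtens_index (i, e) = i*N + e,
   i.e. system factor first, environment factor second. *)
Definition kron {C : numClosedFieldType} N (A B : 'M[C]_N) : 'M[C]_(N * N) :=
  mxtens.tensmx A B.

Definition ptraceE {C : numClosedFieldType} N (M : 'M[C]_(N * N)) : 'M[C]_N :=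
  \matrix_(i, j) \sum_(e < N)
     M (mxtens.mxtens_index (i, e)) (mxtens.mxtens_index (j, e)).

Definition unistoch_channel {C : numClosedFieldType} N (U : 'M[C]_(N * N))
    (rho : 'M[C]_N) : 'M[C]_N :=
  ptraceE (U *m kron rho ((N%:R)^-1 *: 1%:M) *m dagger U).

Definition proj_ket {C : numClosedFieldType} N (i : 'I_N) : 'M[C]_N := delta_mx i i.

Definition hyperdec {C : numClosedFieldType} N (Phi : 'M[C]_N -> 'M[C]_N) : 'M[C]_N :=
  \matrix_(i, j) \tr (proj_ket i *m Phi (proj_ket j)).

Definition unistoch_mx {C : numClosedFieldType} N (V : 'M[C]_N) : 'M[C]_N :=
  \matrix_(i, j) (V i j * Num.conj (V i j)).

(* Main.v *)
Require Import Defs.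
From HB Require Import structures.
From mathcomp Require Import all_boot all_order all_algebra.
From mathcomp Require Import spectral.
From mathcomp Require mxtens.
Set Implicit Arguments. Unset Strict Implicit. Unset Printing Implicit Defensive.
Import Order.TTheory GRing.Theory Num.Theory.
Local Open Scope ring_scope.

Section Aux.
Variable C : numClosedFieldType.

Lemma tens11 N : mxtens.tensmx (1%:M : 'M[C]_N) (1%:M : 'M[C]_N) = 1%:M.
Proof.
apply/matrixP=> i j.
case: (mxtens.mxtens_indexP i)=> i0 i1; case: (mxtens.mxtens_indexP j)=> j0 j1.
rewrite mxtens.tensmxE !mxE -natrM; congr (_%:R).
by rewrite (inj_eq (can_inj (@mxtens.mxtens_indexK _ _))) xpair_eqE mulnb.
Qed.

Lemma dagger_kron N (A B : 'M[C]_N) : dagger (kron A B) = kron (dagger A) (dagger B).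
Proof. by rewrite /dagger /kron mxtens.trmx_tens mxtens.map_mxT. Qed.

Lemma dagger1 N : dagger (1%:M : 'M[C]_N) = 1%:M.
Proof. by rewrite /dagger trmx1 map_mx1. Qed.

Lemma ptrace_kron N (A : 'M[C]_N) c :
  ptraceE (kron A (c *: 1%:M)) = (c *+ N) *: A.
Proof.
apply/matrixP=> i j; rewrite !mxE.
under eq_bigr do rewrite mxtens.tensmxE !mxE eqxx mulr1n.
by rewrite sumr_const card_ord mulr1 mulrnAl mulrC.
Qed.

Lemma tr_delta N (i : 'I_N) (M : 'M[C]_N) : \tr (delta_mx i i *m M) = M i i.
Proof.
rewrite /mxtrace (bigD1 i) //= big1 ?addr0.
  rewrite mxE (bigD1 i) //= big1 ?addr0; first by rewrite mxE !eqxx mul1r.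
  by move=> k /negbTE nk; rewrite mxE nk andbF mul0r.
move=> k /negbTE nk; rewrite mxE big1 // => l _; by rewrite mxE nk mul0r.
Qed.

Lemma conj_delta N (V : 'M[C]_N) i j :
  (V *m delta_mx j j *m dagger V) i i = V i j * Num.conj (V i j).
Proof.
rewrite mxE (bigD1 j) //= big1 ?addr0.
  rewrite !mxE (bigD1 j) //= big1 ?addr0; first by rewrite mxE !eqxx mulr1.
  by move=> k /negbTE nk; rewrite mxE nk /= mulr0.
move=> k /negbTE nk; rewrite mxE big1 ?mul0r // => l _.
by rewrite mxE nk andbF mulr0.
Qed.
End Aux.

Theorem proposition9 (C : numClosedFieldType) (N : nat) :
  (2 <= N)%N ->
  forall V : 'M[C]_N, V \is unitarymx ->
  exists U : 'M[C]_(N * N),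
    U \is unitarymx /\ unistoch_mx V = hyperdec (unistoch_channel U).
Proof.
move=> N2 V /unitarymxP VU.
exists (kron V 1%:M); split.
  apply/unitarymxP.
  change (kron V 1%:M *m dagger (kron V 1%:M) = 1%:M).
  rewrite dagger_kron dagger1 /kron mxtens.tensmx_mul mulmx1.
  have -> : V *m dagger V = 1%:M by exact: VU.
  exact: tens11.
apply/matrixP=> i j.
rewrite !mxE /unistoch_channel dagger_kron dagger1 /kron !mxtens.tensmx_mul.
rewrite mul1mx mulmx1 ptrace_kron.
have hN : (N%:R : C) != 0 by rewrite pnatr_eq0 -lt0n (leq_trans _ N2).
by rewrite -mulr_natl divff // scale1r tr_delta /proj_ket conj_delta.
Qed.
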